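(* For all positive integers $k$, $n$ and $s$, $$\sum_{q\mid k}\bigl|c_q^{(s)}(n)\bigr|\le n\,2^{\omega(k)}.$$
   Context: For positive integers $a,b,s$, the generalized gcd $(a,b)_s$ is the largest $d^s$ ($d\in\mathbb{N}$) such that $d^s\mid a$ and $d^s\mid b$. The Cohen–Ramanujan sum is defined for positive integers $q,n,s$ by $$c_q^{(s)}(n)=\sum_{\substack{h=1\\ (h,q^s)_s=1}}^{q^s} e^{2\pi i n h/q^s}.$$ $\omega(k)$ denotes the number of distinct prime divisors of $k$; the sum is over the positive divisors $q$ of $k$. *)

(* Defs.v *)
From Stdlib Require Import Reals.
From Coquelicot Require Import Coquelicot.
From mathcomp Require Import all_boot.

Set Implicit Arguments.
Unset Strict Implicit.
Unset Printing Implicit Defensive.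

(* Generalized gcd (a,b)_s : the largest d^s (d a natural number) with
   d^s | a and d^s | b.  For a > 0, any such d satisfies d <= a, so it
   suffices to range over d < a.+1 (d = 0 never qualifies for a > 0). *)
Definition ggcd (a b s : nat) : nat :=
  ((\max_(d < a.+1 | (d ^ s %| a) && (d ^ s %| b)) d) ^ s)%N.

Definition e2pi (x : R) : C := (cos (2 * PI * x), sin (2 * PI * x))%R.

Definition cohen_ramanujan (s q n : nat) : C :=
  foldr Cplus (RtoC 0)
    (map (fun h => e2pi (INR (n * h) / INR (q ^ s))%R)
         (filter (fun h => ggcd h (q ^ s) s == 1%N) (iota 1 (q ^ s)))).

Definition omega (k : nat) : nat := size (primes k).

(* Main.v *)
Require Import Defs.
From Stdlib Require Import Reals.
From Coquelicot Require Import Coquelicot.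
From mathcomp Require Import all_boot.
From HB Require Import structures.
From Stdlib Require Import Lra.
From mathcomp Require Import zify.

Module Aux1.



Lemma e2pi_add x y : e2pi (x + y) = Cmult (e2pi x) (e2pi y).
Proof. unfold e2pi, Cmult; simpl. rewrite Rmult_plus_distr_l cos_plus sin_plus. f_equal; ring. Qed.

Lemma e2pi_nat (N : nat) : e2pi (INR N) = RtoC 1.
Proof.
unfold e2pi, RtoC.
have ->: 2 * PI * INR N = 0 + 2 * INR N * PI by ring.
by rewrite cos_period sin_period cos_0 sin_0.
Qed.

Definition T (x : R) (m L : nat) : C :=
  foldr Cplus (RtoC 0) (map (fun h => e2pi (INR h * x)) (iota m L)).

Lemma T_shift x m L : Cmult (e2pi x) (T x m L) = T x m.+1 L.
Proof.
elim: L m => [|L IH] m.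
  rewrite /T /=. apply: injective_projections; simpl; ring.
have e: T x m L.+1 = Cplus (e2pi (INR m * x)) (T x m.+1 L) by [].
have e': T x m.+1 L.+1 = Cplus (e2pi (INR m.+1 * x)) (T x m.+2 L) by [].
rewrite e e' Cmult_plus_distr_l IH -e2pi_add S_INR.
f_equal; f_equal; ring.
Qed.

Lemma T_snoc x m L : T x m L.+1 = Cplus (T x m L) (e2pi (INR (m + L) * x)).
Proof.
rewrite /T -addn1 iotaD map_cat foldr_cat /=.
elim: (iota m L) => [|a l IH] /=.
  apply: injective_projections; simpl; ring.
by rewrite IH Cplus_assoc.
Qed.

Lemma T_periodic x Q : e2pi (INR Q * x) = RtoC 1 ->
  T x 1 Q = RtoC 0 \/ e2pi x = RtoC 1.
Proof.
move=> hQ.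
have h1 : T x 1 Q.+1 = Cplus (e2pi (INR 1 * x)) (T x 2 Q) by [].
have h2 := T_snoc x 1 Q.
have h3 : e2pi (INR (1 + Q) * x) = e2pi x.
  rewrite add1n S_INR Rmult_plus_distr_r Rmult_1_l Rplus_comm e2pi_add hQ.
  apply: injective_projections; simpl; ring.
rewrite h3 h1 -T_shift Rmult_1_l in h2.
have hT : Cmult (e2pi x) (T x 1 Q) = T x 1 Q.
  move: h2. case: (T x 1 Q) => a b. case: (e2pi x) => c d [] /= H1 H2.
  apply: injective_projections; simpl; lra.
case: (Ceq_dec (e2pi x) (RtoC 1)) => hz; [by right|left].
have hz' : Cminus (e2pi x) (RtoC 1) <> RtoC 0.
  move=> h; apply: hz.
  apply: injective_projections; move: h; case: (e2pi x) => a b [] /=; lra.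
have hT' : Cmult (Cminus (e2pi x) (RtoC 1)) (T x 1 Q) = RtoC 0.
  move: hT. case: (T x 1 Q) => a b. case: (e2pi x) => c d [] /= H1 H2.
  apply: injective_projections; simpl; lra.
have -> : T x 1 Q = Cmult (Cinv (Cminus (e2pi x) (RtoC 1))) (Cmult (Cminus (e2pi x) (RtoC 1)) (T x 1 Q)).
  field. exact hz'.
rewrite hT'. apply: injective_projections; simpl; ring.
Qed.

Lemma cos_not1 (n Q : nat) : (0 < Q)%N -> ~~ (Q %| n)%N ->
  cos (2 * PI * (INR n / INR Q)) <> 1.
Proof.
move=> Q0 nd.
have r0 : (0 < n %% Q)%N by rewrite lt0n.
have rQ : (n %% Q < Q)%N by rewrite ltn_pmod.
have hQ : 0 < INR Q by apply: lt_0_INR; apply/ltP.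
have hr : 0 < INR (n %% Q) by apply: lt_0_INR; apply/ltP.
have hrQ : INR (n %% Q) < INR Q by apply: lt_INR; apply/ltP.
have e : 2 * PI * (INR n / INR Q) = 2 * (PI * INR (n %% Q) / INR Q) + 2 * INR (n %/ Q) * PI.
  rewrite {1}(divn_eq n Q) plus_INR mult_INR. field. lra.
rewrite e cos_period cos_2a_sin.
have : 0 < sin (PI * INR (n %% Q) / INR Q).
  apply: sin_gt_0.
    apply: Rdiv_lt_0_compat => //. apply: Rmult_lt_0_compat => //. exact: PI_RGT_0.
  apply/(Rmult_lt_reg_r (INR Q)) => //. rewrite /Rdiv Rmult_assoc Rinv_l; last lra.
  rewrite Rmult_1_r. apply: Rmult_lt_compat_l => //. exact: PI_RGT_0.
move=> h. nra.
Qed.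

Lemma ones_sum (l : seq nat) f : (forall h, h \in l -> f h = RtoC 1) ->
  foldr Cplus (RtoC 0) (map f l) = RtoC (INR (size l)).
Proof.
elim: l => [|a l IH] H; first by [].
rewrite [map _ _]/= [foldr _ _ _]/= [size _]/= S_INR IH; last by move=> h hl; apply: H; rewrite inE hl orbT.
rewrite H ?inE ?eqxx //.
apply: injective_projections; simpl; ring.
Qed.

Lemma csum0 (n Q : nat) : (0 < Q)%N ->
  foldr Cplus (RtoC 0) (map (fun h => e2pi (INR (n * h) / INR Q)) (iota 1 Q))
  = RtoC (if (Q %| n)%N then INR Q else 0).
Proof.
move=> Q0.
have hQ : INR Q <> 0 by apply: not_0_INR; apply/eqP; rewrite -lt0n.
have -> : map (fun h => e2pi (INR (n * h) / INR Q)) (iota 1 Q)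
   = map (fun h => e2pi (INR h * (INR n / INR Q))) (iota 1 Q).
  apply: eq_map => h. f_equal. rewrite mult_INR. field. exact hQ.
case: ifP => nd.
  rewrite ones_sum ?size_iota // => h _.
  move/dvdnP: nd => [N ->]. rewrite mult_INR.
  have -> : INR h * (INR N * INR Q / INR Q) = INR (h * N) by rewrite mult_INR; field.
  exact: e2pi_nat.
have hp : e2pi (INR Q * (INR n / INR Q)) = RtoC 1.
  have -> : INR Q * (INR n / INR Q) = INR n by field.
  exact: e2pi_nat.
change (T (INR n / INR Q) 1 Q = RtoC 0).
case: (T_periodic _ _ hp) => [-> //|h].
exfalso. apply: (cos_not1 n Q Q0 (negbT nd)).
by move: h => [].
Qed.

End Aux1.
Import Aux1.

Lemma ggcd_good h q s : (0 < h)%N -> (0 < q)%N -> (0 < s)%N ->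
  (ggcd h (q ^ s) s == 1)%N = all (fun p => ~~ (p ^ s %| h)%N) (primes q).
Proof.
move=> h0 q0 s0. rewrite /ggcd.
set M := \max_(d < h.+1 | _) _.
rewrite -{1}(exp1n s) eqn_exp2r //.
apply/idP/idP.
- move/eqP=> M1. apply/allP => p pq. apply/negP => php.
  move: pq; rewrite mem_primes => /and3P[pp _ pdq].
  have ph : (p < h.+1)%N.
    rewrite ltnS. apply: leq_trans (dvdn_leq h0 php).
    rewrite -{1}(expn1 p). apply: leq_pexp2l => //. exact: prime_gt0.
  have := @leq_bigmax_cond _ (fun d : 'I_h.+1 => (d ^ s %| h) && (d ^ s %| q ^ s))%N
     (fun d => nat_of_ord d) (Ordinal ph).
  rewrite /= php dvdn_pexp2r // pdq => /(_ isT). rewrite -/M M1.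
  by move: (prime_gt1 pp); case: ltnP.
- move/allP=> G. rewrite eqn_leq. apply/andP; split.
  + apply/bigmax_leqP => d /andP[dh dq]. rewrite leqNgt; apply/negP => d1.
    have pp := pdiv_prime d1. have pd := pdiv_dvd d.
    rewrite dvdn_pexp2r // in dq.
    have : pdiv d \in primes q by rewrite mem_primes pp q0 (dvdn_trans pd dq).
    move/G/negP; apply. apply: dvdn_trans dh. exact: dvdn_exp2r.
  + have o1 : (1 < h.+1)%N by rewrite ltnS.
    have := @leq_bigmax_cond _ (fun d : 'I_h.+1 => (d ^ s %| h) && (d ^ s %| q ^ s))%N
     (fun d => nat_of_ord d) (Ordinal o1).
    by rewrite /= exp1n !dvd1n => /(_ isT).
Qed.

Definition good (s : nat) (P : seq nat) (h : nat) : bool :=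
  all (fun p => ~~ (p ^ s %| h)%N) P.
Definition csum (n Q : nat) (L : seq nat) : C :=
  foldr Cplus (RtoC 0) (map (fun h => e2pi (INR (n * h) / INR Q)) L).
Definition FC s n P Q := csum n Q (filter (good s P) (iota 1 Q)).
Definition G (n Q : nat) : R := if (Q %| n)%N then INR Q else R0.
Fixpoint Fr (s n : nat) (P : seq nat) (Q : nat) : R :=
  match P with
  | [::] => G n Q
  | p :: P' => Rminus (Fr s n P' Q) (Fr s n P' (Q %/ p ^ s))
  end.

Lemma csum_cons n Q x L :
  csum n Q (x :: L) = Cplus (e2pi (INR (n * x) / INR Q)) (csum n Q L).
Proof. by []. Qed.

Lemma csum_split n Q (a b : pred nat) L :
  csum n Q (filter b L) =
  Cplus (csum n Q (filter (fun h => a h && b h) L))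
        (csum n Q (filter (fun h => ~~ a h && b h) L)).
Proof.
elim: L => [|x L IH] /=.
  rewrite /csum /=. apply: injective_projections; simpl; ring.
case: (a x); case: (b x) => /=; rewrite ?csum_cons IH;
  apply: injective_projections; simpl; ring.
Qed.

Lemma filter_dvd_iota d M : (0 < d)%N ->
  filter (fun h => d %| h)%N (iota 1 (d * M)) = map (muln d) (iota 1 M).
Proof.
move=> d0. elim: M => [|M IH]; first by rewrite muln0.
rewrite mulnS addnC iotaD filter_cat IH.
rewrite -(addn1 M) iotaD map_cat /=.
congr (_ ++ _).
case: d d0 IH => // d' _ _.
rewrite -(addn1 d') iotaD filter_cat /=.
have -> : [seq h <- iota (1 + (d' + 1) * M) d' | (d' + 1 %| h)%N] = [::].
  apply/eqP; rewrite -[_ == _]negbK -has_filter; apply/hasPn => x.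
  rewrite mem_iota => /andP[x1 x2]. apply/negP => /dvdnP [k hk].
  move: x1 x2; rewrite hk => x1 x2.
  have h1 : (M < k)%N.
    rewrite ltnNge; apply/negP => hkM.
    have : (k * (d' + 1) <= M * (d' + 1))%N by apply: leq_mul.
    lia.
  have h2 : (k < M.+1)%N.
    rewrite ltnNge; apply/negP => hkM.
    have : (M.+1 * (d' + 1) <= k * (d' + 1))%N by apply: leq_mul.
    lia.
  lia.
have e : (1 + (d' + 1) * M + d' = (d' + 1) * (1 + M))%N by lia.
by rewrite e dvdn_mulr.
Qed.

Lemma coprime_pow_primes x p s : prime x -> prime p -> x != p ->
  coprime (x ^ s) (p ^ s).
Proof.
move=> px pp xp. apply: coprimeXl; apply: coprimeXr.
by rewrite prime_coprime // dvdn_prime2 //.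
Qed.

Lemma good_mul s P p h : all prime P -> prime p -> p \notin P ->
  good s P (p ^ s * h) = good s P h.
Proof.
move=> /allP aP pp pP. apply: eq_in_all => x xP /=.
rewrite Gauss_dvdr //. apply: coprime_pow_primes => //; first exact: aP.
by apply: contraNneq pP => <-.
Qed.

Lemma csum_map n d M L : (0 < d)%N -> (0 < M)%N ->
  csum n (d * M) (map (muln d) L) = csum n M L.
Proof.
move=> d0 M0. rewrite /csum -map_comp. congr (foldr _ _ _).
apply: eq_map => h /=. f_equal.
have hd : INR d <> R0 by apply: not_0_INR; apply/eqP; rewrite -lt0n.
have hM : INR M <> R0 by apply: not_0_INR; apply/eqP; rewrite -lt0n.
rewrite !mult_INR. field. split => //.
Qed.

Lemma FC_cons s n p P Q : all prime P -> prime p -> p \notin P ->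
  (p ^ s %| Q)%N -> (0 < Q)%N ->
  FC s n (p :: P) Q = Cminus (FC s n P Q) (FC s n P (Q %/ p ^ s)).
Proof.
move=> aP pp pP dQ Q0.
have d0 : (0 < p ^ s)%N by rewrite expn_gt0 prime_gt0.
set M := Q %/ p ^ s.
have QM : Q = (p ^ s * M)%N by rewrite /M mulnC divnK.
have M0 : (0 < M)%N by move: Q0; rewrite QM muln_gt0 => /andP[].
have sp := csum_split n Q (fun h => p ^ s %| h)%N (good s P) (iota 1 Q).
have e1 : [seq x <- iota 1 Q | (p ^ s %| x)%N && good s P x]
      = map (muln (p ^ s)) (filter (good s P) (iota 1 M)).
  have -> : [seq x <- iota 1 Q | (p ^ s %| x)%N && good s P x]
     = [seq x <- [seq x <- iota 1 Q | (p ^ s %| x)%N] | good s P x].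
    by rewrite -filter_predI; apply: eq_filter => x /=; rewrite andbC.
  rewrite QM filter_dvd_iota // filter_map. congr map.
  apply: eq_filter => h /=. exact: good_mul.
rewrite e1 in sp.
have := @csum_map n (p ^ s) M (filter (good s P) (iota 1 M)) d0 M0. rewrite -QM => e2.
rewrite e2 in sp.
rewrite /FC sp.
have -> : [seq x <- iota 1 Q | ~~ (p ^ s %| x)%N && good s P x]
   = [seq x <- iota 1 Q | good s (p :: P) x] by [].
move: (csum _ _ _) (csum _ _ _) => a b.
apply: injective_projections; simpl; ring.
Qed.

Lemma FC_Fr s n P Q : uniq P -> all prime P -> all (fun x => x ^ s %| Q)%N P ->
  (0 < Q)%N -> FC s n P Q = RtoC (Fr s n P Q).
Proof.
elim: P Q => [|p P IH] Q.
  move=> _ _ _ Q0. rewrite /FC /=.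
  have -> : [seq x <- iota 1 Q | good s [::] x] = iota 1 Q.
    by rewrite (eq_filter (a2 := predT)) ?filter_predT.
  by rewrite /csum csum0.
move=> /= /andP[pP uP] /andP[pp aP] /andP[dQ aQ] Q0.
rewrite FC_cons //.
have d0 : (0 < p ^ s)%N by rewrite expn_gt0 prime_gt0.
have M0 : (0 < Q %/ p ^ s)%N by rewrite divn_gt0 // dvdn_leq.
rewrite IH // IH //.
  by rewrite /RtoC; apply: injective_projections; simpl; ring.
apply/allP => x xP.
have := allP aQ x xP. rewrite -{1}(divnK dQ) Gauss_dvdl //.
apply: coprime_pow_primes; first exact: (allP aP).
  by [].
by apply: contraNneq pP => <-.
Qed.

Lemma cohen_FC s q n : (0 < q)%N -> (0 < s)%N ->
  cohen_ramanujan s q n = FC s n (primes q) (q ^ s).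
Proof.
move=> q0 s0. rewrite /cohen_ramanujan /FC /csum. congr (foldr _ _ (map _ _)).
apply: eq_in_filter => h. rewrite mem_iota => /andP[h1 _].
exact: ggcd_good.
Qed.

Lemma FC_eq s n P P' Q : P =i P' -> FC s n P Q = FC s n P' Q.
Proof. move=> e. rewrite /FC /good. congr csum. apply: eq_filter => h. exact: (eq_all_r e). Qed.

Lemma G_mul n d R : coprime d R -> G n (d * R) = Rmult (G n d) (G n R).
Proof.
move=> c. rewrite /G Gauss_dvd //.
case: (d %| n)%N; case: (R %| n)%N => /=; rewrite ?mult_INR; ring.
Qed.

Lemma wf_div s p P Q : all prime P -> prime p -> p \notin P ->
  (p ^ s %| Q)%N -> all (fun x => x ^ s %| Q)%N P ->
  all (fun x => x ^ s %| Q %/ p ^ s)%N P.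
Proof.
move=> aP pp pP dQ aQ. apply/allP => x xP.
have := allP aQ x xP. rewrite -{1}(divnK dQ) Gauss_dvdl //.
apply: coprime_pow_primes; first exact: (allP aP).
  by [].
by apply: contraNneq pP => <-.
Qed.

Lemma Fr_mul s n P d R : uniq P -> all prime P -> all (fun x => x ^ s %| R)%N P ->
  coprime d R -> Fr s n P (d * R) = Rmult (G n d) (Fr s n P R).
Proof.
elim: P R => [|p P IH] R; first by move=> _ _ _ c; exact: G_mul.
move=> /= /andP[pP uP] /andP[pp aP] /andP[dQ aQ] c.
rewrite -muln_divA // IH // IH //; first ring.
  exact: wf_div.
apply: coprime_dvdr c. exact: dvdn_div.
Qed.

Lemma Fr_changeN s n p P Q : (0 < n)%N -> prime p ->
  uniq P -> all prime P -> all (fun x => x ^ s %| Q)%N P -> coprime Q p ->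
  Fr s n P Q = Fr s (n`_p^') P Q.
Proof.
move=> n0 pp. elim: P Q => [|x P IH] Q.
  move=> _ _ _ c /=. rewrite /G.
  have -> : (Q %| n)%N = (Q %| n`_p^')%N.
    rewrite -{1}(partnC p n0) Gauss_dvdr // p_part.
    by apply: coprimeXr.
  by [].
move=> /= /andP[pP uP] /andP[pp' aP] /andP[dQ aQ] c.
rewrite IH // IH //.
  exact: wf_div.
apply: coprime_dvdl c. exact: dvdn_div.
Qed.

Definition cr s n q := Rabs (Fr s n (primes q) (q ^ s)).

Lemma wf_primes s q : all prime (primes q) /\ all (fun x => x ^ s %| q ^ s)%N (primes q).
Proof.
split; apply/allP => x; rewrite mem_primes => /and3P[px _ xq] //.
exact: dvdn_exp2r.
Qed.

Lemma cmod_cr s q n : (0 < q)%N -> (0 < s)%N ->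
  Cmod (cohen_ramanujan s q n) = cr s n q.
Proof.
move=> q0 s0. have [a1 a2] := wf_primes s q.
rewrite cohen_FC // FC_Fr ?primes_uniq // ?expn_gt0 ?q0 //.
exact: Cmod_R.
Qed.

Lemma cr_mul s n p j r : prime p -> (0 < r)%N -> ~~ (p %| r)%N -> (0 < s)%N ->
  cr s n (p ^ j.+1 * r) =
  Rmult (Rabs (Rminus (G n ((p ^ j.+1) ^ s)) (G n ((p ^ j) ^ s)))) (cr s n r).
Proof.
move=> pp r0 pr s0.
have p0 := prime_gt0 pp.
set q := (p ^ j.+1 * r)%N.
have q0 : (0 < q)%N by rewrite /q muln_gt0 expn_gt0 p0.
have [a1 a2] := wf_primes s q.
have [b1 b2] := wf_primes s r.
have pP : p \notin primes r by rewrite mem_primes pp r0.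
have pq : (p %| q)%N by rewrite /q dvdn_mulr // dvdn_exp.
have e : RtoC (Fr s n (primes q) (q ^ s)) = RtoC (Fr s n (p :: primes r) (q ^ s)).
  rewrite -!FC_Fr ?primes_uniq // ?expn_gt0 ?q0 //=.
  - apply: FC_eq => x. rewrite inE !mem_primes r0 q0 /=.
    apply/idP/idP.
    + move=> /andP[px xq]. rewrite px /=. move: xq; rewrite /q Euclid_dvdM //.
      by rewrite Euclid_dvdX // dvdn_prime2 // andbT.
    + case/orP => [/eqP -> | /andP[px xr]]; first by rewrite pp.
      by rewrite px /= /q dvdn_mull.
  - by rewrite pP primes_uniq.
  - by rewrite pp b1.
  - rewrite dvdn_exp2r //=. apply/allP => x xr. apply: dvdn_exp2r.
    move: xr; rewrite mem_primes => /and3P[_ _ xr]. by rewrite /q dvdn_mull.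
have e1 := f_equal fst e. simpl in e1. rewrite /cr e1 /=.
have cpr : forall k, coprime ((p ^ k) ^ s) (r ^ s).
  move=> k. apply: coprimeXl; apply: coprimeXr; apply: coprimeXl.
  by rewrite prime_coprime.
have -> : (q ^ s = (p ^ j.+1) ^ s * r ^ s)%N by rewrite /q expnMn.
have -> : ((p ^ j.+1) ^ s * r ^ s %/ p ^ s = (p ^ j) ^ s * r ^ s)%N.
  by rewrite expnS expnMn -mulnA mulKn // expn_gt0 p0.
rewrite !Fr_mul ?primes_uniq // -Rmult_minus_distr_r Rabs_mult //.
Qed.

Lemma cr_changeN s n p r : (0 < n)%N -> prime p -> (0 < r)%N -> ~~ (p %| r)%N ->
  cr s n r = cr s (n`_p^') r.
Proof.
move=> n0 pp r0 pr. have [b1 b2] := wf_primes s r.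
rewrite /cr (@Fr_changeN s n p) ?primes_uniq // ?expn_gt0 ?r0 //.
apply: coprimeXl. by rewrite coprime_sym prime_coprime.
Qed.


Lemma divisors_perm p k : prime p -> (0 < k)%N ->
  perm_eq (divisors k)
    [seq (p ^ j * r)%N | j <- iota 0 (logn p k).+1, r <- divisors (k`_p^')].
Proof.
move=> pp k0.
have p0 := prime_gt0 pp.
have m0 : (0 < k`_p^')%N by apply: part_gt0.
have kE : k = (p ^ logn p k * k`_p^')%N by rewrite -p_part partnC.
have cpm : forall r, r \in divisors k`_p^' -> coprime p r.
  move=> r; rewrite -dvdn_divisors // => rm.
  apply: (coprime_dvdr rm). have := coprime_partC p p k. by rewrite part_pnat_id ?pnat_id.
apply: uniq_perm; first exact: divisors_uniq.
  apply: allpairs_uniq; [exact: iota_uniq | exact: divisors_uniq |].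
  move=> [j r] [j' r'] /allpairsP[[j1 r1] [_ r1m [-> ->]]] /allpairsP[[j2 r2] [_ r2m [-> ->]]] /=.
  move=> e.
  have r10 : (0 < r1)%N by apply: dvdn_gt0 m0 _; rewrite dvdn_divisors.
  have r20 : (0 < r2)%N by apply: dvdn_gt0 m0 _; rewrite dvdn_divisors.
  have lj : forall j r, r \in divisors k`_p^' -> (0 < r)%N -> logn p (p ^ j * r) = j.
    move=> jj rr rm r0. rewrite lognM ?expn_gt0 ?p0 // pfactorK // logn_coprime ?addn0 //.
    exact: cpm.
  have ej : j1 = j2 by rewrite -(lj j1 r1) // e lj.
  subst j2. move/eqP: e. rewrite eqn_pmul2l ?expn_gt0 ?p0 // => /eqP -> //.
move=> d. apply/idP/idP.
- rewrite -dvdn_divisors // => dk.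
  have d0 : (0 < d)%N by apply: dvdn_gt0 dk.
  apply/allpairsP. exists (logn p d, d`_p^'). split.
  + rewrite mem_iota /= add0n ltnS -pfactor_dvdn //. apply: dvdn_trans dk.
    by rewrite -p_part dvdn_part.
  + by rewrite -dvdn_divisors // partn_dvd.
  + by rewrite -p_part partnC.
- move=> /allpairsP[[j r] [jI rm ->]].
  rewrite -dvdn_divisors // kE. apply: dvdn_mul.
    rewrite dvdn_Pexp2l ?prime_gt1 //. by move: jI; rewrite mem_iota /= ltnS.
  by rewrite dvdn_divisors.
Qed.

Lemma omega_split p k : prime p -> (p %| k)%N -> (0 < k)%N ->
  omega k = (omega k`_p^').+1.
Proof.
move=> pp pk k0. rewrite /omega primes_part.
have -> : size (primes k) = size (p :: [seq x <- primes k | x \in p^']).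
  apply: perm_size. apply: uniq_perm.
  - exact: primes_uniq.
  - rewrite /= filter_uniq ?primes_uniq // andbT mem_filter.
    by rewrite !inE eqxx.
  - move=> x. rewrite inE mem_filter !inE.
    case: (eqVneq x p) => [->|] //=.
    by rewrite mem_primes pp k0 pk.
by [].
Qed.

Lemma Rplus_assoc' : associative Rplus.
Proof. by move=> x y z; rewrite Rplus_assoc. Qed.
HB.instance Definition _ := Monoid.isComLaw.Build R R0 Rplus Rplus_assoc' Rplus_comm Rplus_0_l.

Local Open Scope R_scope.

Lemma big_Rmult_l (l : seq nat) (c : R) (F : nat -> R) :
  \big[Rplus/R0]_(x <- l) (c * F x) = c * \big[Rplus/R0]_(x <- l) F x.
Proof.
elim: l => [|a l IH]; first by rewrite !big_nil; ring.
by rewrite !big_cons IH; ring.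
Qed.

Lemma big_Rabs_ge0 (l : seq nat) (F : nat -> R) : (forall x, 0 <= F x) ->
  0 <= \big[Rplus/R0]_(x <- l) F x.
Proof.
move=> H. elim: l => [|a l IH]; first by rewrite big_nil; lra.
rewrite big_cons. have := H a. lra.
Qed.

Lemma ppow_le_part n p a s : (0 < n)%N -> prime p -> ((p ^ a) ^ s %| n)%N ->
  INR ((p ^ a) ^ s) <= INR (n`_p).
Proof.
move=> n0 pp d. apply: le_INR. apply/leP.
rewrite p_part -expnM. rewrite -expnM pfactor_dvdn // in d.
by rewrite leq_pexp2l // prime_gt0.
Qed.

Lemma telescope n p s a : (0 < n)%N -> prime p ->
  1 + \big[Rplus/R0]_(0 <= j < a) Rabs (G n ((p ^ j.+1) ^ s) - G n ((p ^ j) ^ s))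
  <= (if ((p ^ a) ^ s %| n)%N then INR ((p ^ a) ^ s) else 2 * INR (n`_p)).
Proof.
move=> n0 pp. elim: a => [|a IH].
  rewrite big_geq // expn0 exp1n dvd1n /=. lra.
rewrite big_nat_recr //=.
have dd : ((p ^ a.+1) ^ s %| n)%N -> ((p ^ a) ^ s %| n)%N.
  apply: dvdn_trans. apply: dvdn_exp2r. by rewrite dvdn_exp2l.
rewrite [G n ((p ^ a.+1) ^ s)]/G [G n ((p ^ a) ^ s)]/G.
case: ifP => h1.
  rewrite (dd h1) in IH *.
  have le1 : INR ((p ^ a) ^ s) <= INR ((p ^ a.+1) ^ s).
    apply: le_INR; apply/leP. apply: dvdn_leq; first by rewrite !expn_gt0 prime_gt0.
    apply: dvdn_exp2r. by rewrite dvdn_exp2l.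
  rewrite Rabs_right; lra.
case: ifP => h0 in IH *.
  have := @ppow_le_part n p a s n0 pp h0.
  rewrite Rminus_0_l Rabs_Ropp Rabs_right; last by apply: Rle_ge; apply: pos_INR.
  lra.
rewrite Rminus_0_r Rabs_R0. lra.
Qed.

Lemma telescope2 n p s a : (0 < n)%N -> prime p ->
  1 + \big[Rplus/R0]_(0 <= j < a) Rabs (G n ((p ^ j.+1) ^ s) - G n ((p ^ j) ^ s))
  <= 2 * INR (n`_p).
Proof.
move=> n0 pp. have := @telescope n p s a n0 pp.
case: ifP => // h. have := @ppow_le_part n p a s n0 pp h.
have := pos_INR ((p ^ a) ^ s). lra.
Qed.

Lemma main_bound s : (0 < s)%N -> forall K k n, (k <= K)%N -> (0 < k)%N -> (0 < n)%N ->
  \big[Rplus/R0]_(q <- divisors k) cr s n q <= INR n * 2 ^ omega k.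
Proof.
move=> s0. elim=> [|K IH] k n kK k0 n0; first by move: kK k0; case: k.
have nR : 1 <= INR n by apply: (le_INR 1); apply/leP.
case: (ltngtP k 1) => [|k1|->]; first by rewrite ltnNge k0.
2: { rewrite [divisors 1]/= big_seq1 /cr [primes 1]/= exp1n /= /G dvd1n /=.
     rewrite Rabs_R1. lra. }
set p := pdiv k. have pp : prime p := pdiv_prime k1.
have pk : (p %| k)%N := pdiv_dvd k.
set m := k`_p^'. set a := logn p k.
have m0 : (0 < m)%N by apply: part_gt0.
have a0 : (0 < a)%N by rewrite /a logn_gt0 mem_primes pp k0 pk.
have kE : k = (p ^ a * m)%N by rewrite /a /m -p_part partnC.
have mk : (m < k)%N.
  rewrite [X in (_ < X)%N]kE ltn_Pmull // -{1}(expn0 p) ltn_exp2l ?prime_gt1 //.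
have pm : ~~ (p %| m)%N.
  rewrite -prime_coprime //. have := coprime_partC p p k. by rewrite part_pnat_id ?pnat_id.
have rI : forall r, r \in divisors m -> (0 < r)%N /\ ~~ (p %| r)%N.
  move=> r; rewrite -dvdn_divisors // => rm. split; first exact: dvdn_gt0 rm.
  apply: contra pm => pr. exact: dvdn_trans rm.
set n' := n`_p^'.
have n'0 : (0 < n')%N by apply: part_gt0.
set A := \big[Rplus/R0]_(r <- divisors m) cr s n r.
have AE : A = \big[Rplus/R0]_(r <- divisors m) cr s n' r.
  apply: eq_big_seq => r /rI [r0 pr]. exact: cr_changeN.
have A0 : 0 <= A by apply: big_Rabs_ge0 => x; exact: Rabs_pos.
have Ab : A <= INR n' * 2 ^ omega m.
  rewrite AE. apply: IH => //. by rewrite -ltnS; apply: leq_trans kK.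
rewrite (perm_big _ (@divisors_perm p k pp k0)) big_allpairs_dep.
change (\big[Rplus/R0]_(j <- index_iota 0 a.+1)
          \big[Rplus/R0]_(r <- divisors m) cr s n (p ^ j * r) <= INR n * 2 ^ omega k).
rewrite big_nat_recl //.
have -> : \big[Rplus/R0]_(r <- divisors m) cr s n (p ^ 0 * r) = A.
  by apply: eq_bigr => r _; rewrite expn0 mul1n.
have -> : \big[Rplus/R0]_(0 <= i < a) \big[Rplus/R0]_(r <- divisors m) cr s n (p ^ i.+1 * r)
   = \big[Rplus/R0]_(0 <= i < a) (A * Rabs (G n ((p ^ i.+1) ^ s) - G n ((p ^ i) ^ s))).
  apply: eq_bigr => i _. rewrite /A Rmult_comm -big_Rmult_l.
  apply: eq_big_seq => r /rI [r0 pr]. by rewrite cr_mul.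
rewrite big_Rmult_l.
have T := @telescope2 n p s a n0 pp.
have ST : 0 <= \big[Rplus/R0]_(0 <= i < a) Rabs (G n ((p ^ i.+1) ^ s) - G n ((p ^ i) ^ s)).
  by apply: big_Rabs_ge0 => x; exact: Rabs_pos.
rewrite (@omega_split p k pp pk k0) -/m /=.
have nE : INR n = INR (n`_p) * INR n'.
  rewrite -mult_INR; f_equal; symmetry; exact: (partnC _ n0).
rewrite nE.
have h1 : A + A * \big[Rplus/R0]_(0 <= i < a) Rabs (G n ((p ^ i.+1) ^ s) - G n ((p ^ i) ^ s))
   = (1 + \big[Rplus/R0]_(0 <= i < a) Rabs (G n ((p ^ i.+1) ^ s) - G n ((p ^ i) ^ s))) * A by ring.
rewrite h1.
have -> : INR n`_p * INR n' * (2 * 2 ^ omega m) = (2 * INR n`_p) * (INR n' * 2 ^ omega m) by ring.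
apply: Rmult_le_compat => //. lra.
Qed.


Theorem theorem1 (k n s : nat) :
  (0 < k)%N -> (0 < n)%N -> (0 < s)%N ->
  (foldr Rplus (IZR 0) (map (fun q => Cmod (cohen_ramanujan s q n)) (divisors k))
     <= INR n * pow 2 (omega k))%R.
Proof.
move=> k0 n0 s0.
change (foldr Rplus R0 (map (fun q => Cmod (cohen_ramanujan s q n)) (divisors k))
     <= INR n * pow 2 (omega k))%R.
rewrite foldrE big_map.
rewrite (@eq_big_seq _ R0 Rplus _ _ (fun q => Cmod (cohen_ramanujan s q n)) (fun q => cr s n q)).
  exact: (@main_bound s s0 k k n (leqnn k) k0 n0).
move=> q; rewrite -dvdn_divisors // => qk. apply: cmod_cr => //. exact: dvdn_gt0 qk.
Qed.
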